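(* Fix $n\ge1$ and let $\mathcal Z_n=\{H\in\mathcal H: X_n(H)=0\}$ be the zero set of $X_n$, i.e. the set of $H\in\mathcal H$ satisfying $$H^{(k+n)}-H^{(k)}H^{(n)}+\sum_{l=1}^{k}H^n_lH^{(k-l)}+\sum_{l=1}^{n}H^k_lH^{(n-l)}=0\quad\text{for all }k\ge0.$$ Then (i) every vector field $X_j$, $j\ge1$, is tangent to $\mathcal Z_n$; (ii) at every point of $\mathcal Z_n$ one has $\frac{\partial H^{(n)}}{\partial t_j}=0$ for all $j\ge1$; consequently (iii) the set $\mathcal S_n=\{H\in\mathcal Z_n: H^{(n)}=z^n\}$ is also invariant under all the flows $X_j$.
   Context: Let $z$ be a formal variable and $\mathcal L$ the space of formal Laurent series $\sum_{j\le N} l_j z^j$ (finitely many positive powers of $z$). Let $\mathcal H$ be the set of sequences $H=(H^{(k)})_{k\ge0}$ of elements of $\mathcal L$ with $H^{(0)}=1$ and, for $k\ge1$, $H^{(k)}=z^k+\sum_{l\ge1}H^k_l z^{-l}$; the coefficients $H^k_l$ are coordinates on $\mathcal H$, and we set $H^0_l=0$. The central system (CS) is the family of vector fields $X_j$, $j\ge1$, on $\mathcal H$, with associated times $t_j$, defined by $$\frac{\partial H^{(k)}}{\partial t_j}=H^{(j+k)}-H^{(j)}H^{(k)}+\sum_{l=1}^{k}H^j_lH^{(k-l)}+\sum_{l=1}^{j}H^k_lH^{(j-l)},\qquad k\ge0;$$ the right-hand side contains only negative powers of $z$, so this determines the components $X_j(H^k_l)$. *)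

(* Defs.v *)
From HB Require Import structures.
From mathcomp Require Import all_boot all_order all_algebra.
Set Implicit Arguments. Unset Strict Implicit. Unset Printing Implicit Defensive.
Import Order.TTheory GRing.Theory Num.Theory.
Local Open Scope ring_scope.

(* A point H of the space \mathcal H is given by its coordinates H^k_l,
   stored as a function  H : nat -> nat -> R ;  only the entries with
   k >= 1 and l >= 1 are meaningful (coordH masks the others, so that
   H^0_l = 0 as in the paper). *)
Definition coordH {R : comRingType} (H : nat -> nat -> R) (k l : nat) : R :=
  if (k == 0%N) || (l == 0%N) then 0 else H k l.

(* A formal Laurent series is represented by its coefficient function
   int -> R (coefficient of z^m).  H^{(0)} = 1 and
   H^{(k)} = z^k + \sum_{l>=1} H^k_l z^{-l} for k >= 1. *)
Definition Hser {R : comRingType} (H : nat -> nat -> R) (k : nat) : int -> R :=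
  fun m => if k == 0%N then (m == 0)%:R
           else if m == k%:Z then 1
           else if m < 0 then coordH H k (absz m)
           else 0.

(* Product of two Laurent series f, g whose coefficients vanish above degree
   N, resp. M:  (fg)_m = \sum_{a + b = m, a <= N, b <= M} f_a g_b
   (a = m - M + i, b = M - i, 0 <= i <= N + M - m). *)
Definition lmul {R : comRingType} (N M : nat) (f g : int -> R) (m : int) : R :=
  \sum_(i < (if m <= (N + M)%N%:Z then (absz ((N + M)%N%:Z - m)).+1 else 0%N))
     f (m - M%:Z + i%:Z) * g (M%:Z - i%:Z).

(* Coefficient of z^m in the right-hand side of dH^{(k)}/dt_j :
   H^{(j+k)} - H^{(j)}H^{(k)} + \sum_{l=1}^k H^j_l H^{(k-l)}
                              + \sum_{l=1}^j H^k_l H^{(j-l)}. *)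
Definition rhs {R : comRingType} (j k : nat) (H : nat -> nat -> R) (m : int) : R :=
  Hser H (j + k) m - lmul j k (Hser H j) (Hser H k) m
  + \sum_(1 <= l < k.+1) coordH H j l * Hser H (k - l) m
  + \sum_(1 <= l < j.+1) coordH H k l * Hser H (j - l) m.

(* The vector field X_j at H: its components X_j(H^k_l) are the
   coefficients of z^{-l} in the right-hand side. *)
Definition Xfield {R : comRingType} (j : nat) (H : nat -> nat -> R) : nat -> nat -> R :=
  fun k l => rhs j k H (- (l%:Z)).

(* Directional derivative at H, along the tangent vector V, of a function F
   on \mathcal H that is given by a universal (polynomial) formula over any
   commutative ring: coefficient of eps in F(H + eps V), computed in R[eps]. *)
Definition ddir {R : comRingType}
  (F : forall S : comRingType, (nat -> nat -> S) -> S)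
  (H V : nat -> nat -> R) : R :=
  (F {poly R} (fun a b => (H a b)%:P + V a b *: 'X))`_1.

Definition Zset {R : comRingType} (n : nat) (H : nat -> nat -> R) : Prop :=
  forall (k : nat) (m : int), rhs n k H m = 0.

Definition Sset {R : comRingType} (n : nat) (H : nat -> nat -> R) : Prop :=
  Zset n H /\ forall m : int, Hser H n m = (m == n%:Z)%:R.

Definition Zeq (n k : nat) (m : int) : forall S : comRingType, (nat -> nat -> S) -> S :=
  fun S G => rhs n k G m.
Definition Heq (n : nat) (m : int) : forall S : comRingType, (nat -> nat -> S) -> S :=
  fun S G => Hser G n m.

(* Main.v *)
Require Import Defs.
From HB Require Import structures.
From mathcomp Require Import all_boot all_order all_algebra.
From mathcomp Require Import zify ring.
Import Order.TTheory GRing.Theory Num.Theory.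
Local Open Scope ring_scope.
Definition ps {S : comRingType} (L T : nat) (f : int -> S) : {poly S} :=
  \poly_(i < T) f (L%:Z - i%:Z).

Lemma sum_rev (S : comRingType) d (F : nat -> S) :
  \sum_(i < d.+1) F i = \sum_(i < d.+1) F (d - i)%N.
Proof.
rewrite (reindex_inj rev_ord_inj) /=; apply: eq_bigr => i _.
by rewrite subSS.
Qed.

Lemma lmul_coef (S : comRingType) N M (f g : int -> S) x T :
  x <= (N + M)%N%:Z -> (absz ((N + M)%N%:Z - x) < T)%N ->
  lmul N M f g x = (ps N T f * ps M T g)`_(absz ((N + M)%N%:Z - x)).
Proof.
move=> hx hT; rewrite /lmul hx coefM.
set d := absz _ in hT *.
have hd : d%:Z = (N + M)%N%:Z - x by rewrite /d; lia.
rewrite (@sum_rev S d (fun i : nat => f (x - M%:Z + i%:Z) * g (M%:Z - i%:Z))) /=; apply: eq_bigr => i _.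
have hi : (i < d.+1)%N := ltn_ord i.
rewrite !coef_poly.
have -> : (i < T)%N by lia.
have -> : (d - i < T)%N by lia.
congr (f _ * _); lia.
Qed.

Lemma lmul_gt (S : comRingType) N M (f g : int -> S) x :
  (N + M)%N%:Z < x -> lmul N M f g x = 0.
Proof. by move=> hx; rewrite /lmul ifF ?big_ord0 //; apply/negbTE; rewrite -ltNge. Qed.

Lemma coef_mul_eql (S : comRingType) (p p' q : {poly S}) d :
  (forall i, (i <= d)%N -> p`_i = p'`_i) -> (p * q)`_d = (p' * q)`_d.
Proof.
move=> h; rewrite !coefM; apply: eq_bigr => i _; rewrite h //.
by rewrite -ltnS.
Qed.

Lemma coef_mul_eqr (S : comRingType) (p q q' : {poly S}) d :
  (forall i, (i <= d)%N -> q`_i = q'`_i) -> (p * q)`_d = (p * q')`_d.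
Proof.
move=> h; rewrite !coefM; apply: eq_bigr => i _; rewrite h //.
by rewrite leq_subr.
Qed.

Lemma lmulC (S : comRingType) N M (f g : int -> S) x :
  lmul N M f g x = lmul M N g f x.
Proof.
case: (lerP x (N + M)%N%:Z) => hx.
  rewrite (@lmul_coef _ _ _ f g _ (absz ((N + M)%N%:Z - x)).+1) //.
  rewrite (@lmul_coef _ _ _ g f _ (absz ((N + M)%N%:Z - x)).+1); last 2 first.
  - by rewrite addnC.
  - by rewrite addnC.
  by rewrite mulrC addnC.
by rewrite !lmul_gt // addnC.
Qed.

Lemma ps_lmul (S : comRingType) N M (f g : int -> S) T i :
  (i < T)%N -> (ps (N + M) T (lmul N M f g))`_i = (ps N T f * ps M T g)`_i.
Proof.
move=> hi; rewrite /ps coef_poly hi -/(ps N T f) -/(ps M T g).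
rewrite (@lmul_coef _ _ _ f g _ (T)); last 2 first.
- lia.
- have -> : absz (((N + M)%N%:Z - ((N + M)%N%:Z - i%:Z))%R) = i by lia. done.
by have -> : absz (((N + M)%N%:Z - ((N + M)%N%:Z - i%:Z))%R) = i by lia.
Qed.

Lemma lmulA (S : comRingType) N M K (f g h : int -> S) x :
  lmul (N + M) K (lmul N M f g) h x = lmul N (M + K) f (lmul M K g h) x.
Proof.
case: (lerP x (N + M + K)%N%:Z) => hx.
  set d := absz ((N + M + K)%N%:Z - x).
  rewrite (@lmul_coef _ _ _ _ _ _ (d.+1)) //.
  rewrite (@lmul_coef _ _ _ _ _ _ (d.+1)); last 2 first.
  - by rewrite addnA.
  - by rewrite addnA.
  rewrite addnA -/d.
  rewrite (@coef_mul_eql _ _ (ps N d.+1 f * ps M d.+1 g)); last first.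
    by move=> i hi; exact: (@ps_lmul S N M f g d.+1 i hi).
  rewrite (@coef_mul_eqr _ (ps N d.+1 f) _ (ps M d.+1 g * ps K d.+1 h)); last first.
    by move=> i hi; exact: (@ps_lmul S M K g h d.+1 i hi).
  by rewrite mulrA.
rewrite !lmul_gt //; by rewrite addnA.
Qed.

Definition bnd {S : comRingType} (f : int -> S) (N : nat) := forall y, N%:Z < y -> f y = 0.

Lemma lmul_bnd_r (S : comRingType) N M M' (f g : int -> S) x :
  bnd g M -> (M <= M')%N -> lmul N M' f g x = lmul N M f g x.
Proof.
move=> hg hM.
case: (lerP x (N + M')%N%:Z) => hx'; last first.
  by rewrite !lmul_gt //; lia.
set s := (M' - M)%N.
set d' := absz ((N + M')%N%:Z - x).
rewrite (@lmul_coef _ _ _ _ _ _ d'.+1) // -/d'.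
rewrite (@coef_mul_eqr _ _ _ ('X^s * ps M d'.+1 g)); last first.
  move=> i hi; rewrite coefXnM /ps !coef_poly.
  have -> : (i < d'.+1)%N by lia.
  case: ifP => his.
    by rewrite hg //; lia.
  have -> : (i - s < d'.+1)%N by lia.
  congr g; lia.
rewrite mulrCA mulrC coefMXn.
case: ifP => hds.
  by rewrite lmul_gt //; lia.
rewrite (@lmul_coef _ _ _ _ _ _ d'.+1); last 2 first.
- lia.
- lia.
congr (_`_ _); lia.
Qed.

Lemma lmul_bnd_l (S : comRingType) N N' M (f g : int -> S) x :
  bnd f N -> (N <= N')%N -> lmul N' M f g x = lmul N M f g x.
Proof. by move=> hf hN; rewrite lmulC (@lmul_bnd_r _ M N N' g f x hf hN) lmulC. Qed.

Lemma lmul_ext (S : comRingType) N M (f f' g g' : int -> S) x :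
  f =1 f' -> g =1 g' -> lmul N M f g x = lmul N M f' g' x.
Proof. by move=> hf hg; rewrite /lmul; apply: eq_bigr => i _; rewrite hf hg. Qed.

Lemma lmul_sum_r (S : comRingType) N M (f : int -> S) T (c : nat -> S) (h : nat -> int -> S) x :
  lmul N M f (fun y => \sum_(t < T) c t * h t y) x = \sum_(t < T) c t * lmul N M f (h t) x.
Proof.
rewrite /lmul; under eq_bigr do rewrite mulr_sumr.
rewrite exchange_big /=; apply: eq_bigr => t _; rewrite mulr_sumr.
by apply: eq_bigr => i _; rewrite mulrCA.
Qed.

Lemma lmul_sub_r (S : comRingType) N M (f g1 g2 : int -> S) x :
  lmul N M f (fun y => g1 y - g2 y) x = lmul N M f g1 x - lmul N M f g2 x.
Proof. by rewrite /lmul -sumrB; apply: eq_bigr => i _; rewrite mulrBr. Qed.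

Lemma lmul0r (S : comRingType) N M (f g : int -> S) x :
  g =1 (fun _ => 0) -> lmul N M f g x = 0.
Proof. by move=> hg; rewrite /lmul big1 // => i _; rewrite hg mulr0. Qed.

Lemma lmul0l (S : comRingType) N M (f g : int -> S) x :
  f =1 (fun _ => 0) -> lmul N M f g x = 0.
Proof. by move=> hf; rewrite /lmul big1 // => i _; rewrite hf mul0r. Qed.

Lemma lmul_bnd (S : comRingType) N M (f g : int -> S) : bnd (lmul N M f g) (N + M).
Proof. by move=> y hy; rewrite lmul_gt. Qed.

Lemma Hser_bnd (S : comRingType) (H : nat -> nat -> S) k : bnd (Hser H k) k.
Proof.
move=> y hy; rewrite /Hser; case: ifP => hk.
  by have -> : (y == 0) = false by apply/negbTE; lia.
have -> : (y == k%:Z) = false by apply/negbTE; lia.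
by have -> : (y < 0) = false by apply/negbTE; lia.
Qed.

Lemma coordH0 (S : comRingType) (H : nat -> nat -> S) k : coordH H k 0 = 0.
Proof. by rewrite /coordH orbT. Qed.

Lemma coordH0l (S : comRingType) (H : nat -> nat -> S) l : coordH H 0 l = 0.
Proof. by rewrite /coordH. Qed.

Lemma Hs_shift (S : comRingType) (H : nat -> nat -> S) j i :
  Hser H j (j%:Z - i%:Z) = (i == 0)%N%:R + (j <= i)%N%:R * coordH H j (i - j)%N.
Proof.
rewrite /Hser; case: (eqVneq j 0%N) => [->|hj] /=.
  by rewrite coordH0l mulr0 addr0 sub0r oppr_eq0.
case: (ltngtP i j) => hij.
- have -> : (j%:Z - i%:Z == j%:Z) = (i == 0)%N by apply/eqP/eqP; lia.
  rewrite mul0r addr0; case: ifP => hi0 //.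
  by rewrite ifF //; apply/negbTE; lia.
- have -> : (j%:Z - i%:Z == j%:Z) = false by apply/negbTE; lia.
  have -> : (j%:Z - i%:Z < 0) by lia.
  have -> : (i == 0)%N = false by apply/negbTE; lia.
  rewrite add0r mul1r; congr coordH; lia.
- subst i; rewrite subrr subnn coordH0 mulr0 addr0.
  rewrite (negbTE hj) ltxx; case: ifP => // /eqP; lia.
Qed.

Lemma g_coef (S : comRingType) (H : nat -> nat -> S) j k (t : nat) :
  lmul j k (Hser H j) (Hser H k) t%:Z =
  (t == j + k)%N%:R + (t < k)%N%:R * coordH H j (k - t)
                    + (t < j)%N%:R * coordH H k (j - t).
Proof.
case: (leqP t (j + k)) => ht; last first.
  rewrite lmul_gt; last by lia.
  have -> : (t == j + k)%N = false by apply/negbTE; lia.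
  have -> : (t < k)%N = false by apply/negbTE; lia.
  have -> : (t < j)%N = false by apply/negbTE; lia.
  by rewrite !mul0r !addr0.
set d := absz ((j + k)%N%:Z - t%:Z).
have hd : d = (j + k - t)%N by rewrite /d; lia.
rewrite (@lmul_coef _ _ _ _ _ _ d.+1) -/d; last 2 first.
- lia.
- lia.
clearbody d; rewrite coefM.
under eq_bigr => i _.
  rewrite /ps !coef_poly ltn_ord.
  rewrite (_ : (d - i < d.+1)%N = true); last by lia.
  rewrite !Hs_shift mulrDl !mulrDr.
  over.
rewrite !big_split /= addrA.
set S4 := (X in _ + X).
have -> : S4 = 0.
  rewrite /S4; apply: big1 => i _.
  case: (leqP j i) => hji; last by rewrite mul0r mul0r.
  case: (leqP k (d - i)) => hki; last by rewrite mul0r mulr0.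
  have -> : (i - j)%N = 0%N by have := ltn_ord i; clear S4; lia.
  by rewrite coordH0 mulr0 mul0r.
rewrite addr0.
rewrite big_ord_recl /= big1; last first.
  by move=> i _; rewrite /bump /= mul0r.
rewrite addr0 big_ord_recl /= big1; last first.
  by move=> i _; rewrite /bump /= mul0r.
rewrite addr0 big_ord_recr /= big1; last first.
  move=> i _.
  have -> : (d - i == 0)%N = false by apply/negbTE; have := ltn_ord i; lia.
  by rewrite mulr0.
rewrite add0r subn0 subnn eqxx /= !mul1r mulr1.
have -> : (d == 0)%N = (t == j + k)%N by apply/eqP/eqP; lia.
rewrite -addrA [X in _ + X]addrC addrA; congr (_ + _ + _).
- case: (ltngtP t k) => htk.
  + have -> : (j <= d)%N by lia.
    have e : (d - j = k - t)%N by lia.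
    by rewrite e.
  + have -> : (j <= d)%N = false by apply/negbTE; lia.
    by rewrite !mul0r.
  + have -> : (d - j = 0)%N by lia.
    by rewrite coordH0 !mulr0 mul0r.
- case: (ltngtP t j) => htj.
  + have -> : (k <= d)%N by lia.
    have e : (d - k = j - t)%N by lia.
    by rewrite e.
  + have -> : (k <= d)%N = false by apply/negbTE; lia.
    by rewrite !mul0r.
  + have -> : (d - k = 0)%N by lia.
    by rewrite coordH0 !mulr0 mul0r.
Qed.

Definition Pp {S : comRingType} (H : nat -> nat -> S) (B : nat) (f : int -> S) (y : int) : S :=
  \sum_(t < B) f t%:Z * Hser H t y.

Lemma sum_delta (S : comRingType) B a (F : nat -> S) :
  (a < B)%N -> \sum_(t < B) (nat_of_ord t == a)%N%:R * F t = F a.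
Proof.
move=> ha; rewrite (bigD1 (Ordinal ha)) //= eqxx mul1r big1 ?addr0 //.
move=> i hi; have -> : (nat_of_ord i == a)%N = false; last by rewrite mul0r.
by apply/negbTE; apply: contra hi => /eqP hia; apply/eqP; apply: val_inj.
Qed.

Lemma sum_lt (S : comRingType) B k (F : nat -> S) :
  (k <= B)%N -> \sum_(t < B) (t < k)%N%:R * F t = \sum_(t < k) F t.
Proof.
move=> hk; rewrite (big_ord_widen _ _ hk) [RHS]big_mkcond /=.
by apply: eq_bigr => i _; case: ifP => _; rewrite ?mul1r ?mul0r.
Qed.

Lemma sum_rev2 (S : comRingType) k (G : nat -> S) :
  \sum_(1 <= l < k.+1) G l = \sum_(t < k) G (k - t)%N.
Proof.
rewrite big_add1 /= big_mkord (reindex_inj rev_ord_inj) /=.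
apply: eq_bigr => i _; congr G; have := ltn_ord i; lia.
Qed.

Lemma rhs_P (S : comRingType) (H : nat -> nat -> S) j k B x :
  (j + k < B)%N ->
  rhs j k H x = Pp H B (lmul j k (Hser H j) (Hser H k)) x
                - lmul j k (Hser H j) (Hser H k) x.
Proof.
move=> hB.
have -> : Pp H B (lmul j k (Hser H j) (Hser H k)) x =
   Hser H (j + k) x + \sum_(1 <= l < k.+1) coordH H j l * Hser H (k - l) x
                    + \sum_(1 <= l < j.+1) coordH H k l * Hser H (j - l) x.
  rewrite /Pp; under eq_bigr do rewrite g_coef !mulrDl.
  rewrite !big_split /= (@sum_delta S B (j + k) (fun t => Hser H t x)) //.
  under eq_bigr do rewrite -mulrA.
  rewrite (@sum_lt S B k (fun t => coordH H j (k - t) * Hser H t x)); last by lia.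
  under eq_bigr do rewrite -mulrA.
  rewrite (@sum_lt S B j (fun t => coordH H k (j - t) * Hser H t x)); last by lia.
  rewrite !sum_rev2; congr (_ + _ + _); apply: eq_bigr => i _; congr (_ * Hser H _ x); have := ltn_ord i; lia.
rewrite /rhs; ring.
Qed.

Lemma Pp_ext (S : comRingType) (H : nat -> nat -> S) B (f f' : int -> S) y :
  f =1 f' -> Pp H B f y = Pp H B f' y.
Proof. by move=> hf; rewrite /Pp; apply: eq_bigr => t _; rewrite hf. Qed.

Lemma Pp_widen (S : comRingType) (H : nat -> nat -> S) N B B' (f : int -> S) y :
  bnd f N -> (N < B)%N -> (B <= B')%N -> Pp H B' f y = Pp H B f y.
Proof.
move=> hf hN hB; rewrite /Pp (big_ord_widen _ (fun t : nat => f t%:Z * Hser H t y) hB).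
rewrite [RHS]big_mkcond /=; apply: eq_bigr => i _; case: ifP => // hi.
by rewrite hf ?mul0r //; lia.
Qed.

Lemma Pp_sum (S : comRingType) (H : nat -> nat -> S) B T (c : nat -> S) (F : nat -> int -> S) x :
  Pp H B (fun y => \sum_(t < T) c t * F t y) x = \sum_(t < T) c t * Pp H B (F t) x.
Proof.
rewrite /Pp; under eq_bigr do rewrite mulr_suml.
rewrite exchange_big /=; apply: eq_bigr => t _; rewrite mulr_sumr.
by apply: eq_bigr => i _; rewrite mulrA.
Qed.

Lemma Pp_sub (S : comRingType) (H : nat -> nat -> S) B (f g : int -> S) x :
  Pp H B (fun y => f y - g y) x = Pp H B f x - Pp H B g x.
Proof. by rewrite /Pp -sumrB; apply: eq_bigr => i _; rewrite mulrBl. Qed.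

Lemma Hs_nonneg (S : comRingType) (H : nat -> nat -> S) t (y : nat) :
  Hser H t y%:Z = (t == y)%N%:R.
Proof.
rewrite /Hser; case: (eqVneq t 0%N) => [->|ht] /=.
  by case: y.
case: (eqVneq y t) => [->|hy]; first by rewrite eqxx.
by rewrite ifF //; apply/negbTE; lia.
Qed.

Lemma Pp_nonneg (S : comRingType) (H : nat -> nat -> S) N B (f : int -> S) (y : nat) :
  bnd f N -> (N < B)%N -> Pp H B f y%:Z = f y%:Z.
Proof.
move=> hf hN; rewrite /Pp.
under eq_bigr do rewrite Hs_nonneg mulrC.
case: (ltnP y B) => hy.
  by rewrite (@sum_delta S B y (fun t => f t%:Z)).
rewrite hf; last by lia.
rewrite big1 // => i _; have -> : (nat_of_ord i == y)%N = false.
  by apply/negbTE; have := ltn_ord i; lia.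
by rewrite mul0r.
Qed.

Lemma rhs_nonneg (S : comRingType) (H : nat -> nat -> S) j k (y : nat) :
  rhs j k H y%:Z = 0.
Proof.
rewrite (@rhs_P _ _ _ _ (j + k).+1) //.
by rewrite (@Pp_nonneg _ _ (j + k)) ?subrr //; apply: lmul_bnd.
Qed.

Lemma rhs_bnd (S : comRingType) (H : nat -> nat -> S) j k N : bnd (rhs j k H) N.
Proof.
move=> y hy; have -> : y = (absz y)%:Z by lia.
exact: rhs_nonneg.
Qed.

Lemma rhsC (S : comRingType) (H : nat -> nat -> S) j k x :
  rhs j k H x = rhs k j H x.
Proof.
rewrite (@rhs_P _ _ _ _ (j + k).+1) // (@rhs_P _ _ k j (j + k).+1); last by lia.
rewrite lmulC; congr (_ - _); apply: Pp_ext => y; exact: lmulC.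
Qed.

Lemma lmul_H0 (S : comRingType) (H : nat -> nat -> S) j x :
  lmul 0 j (Hser H 0) (Hser H j) x = Hser H j x.
Proof.
case: (lerP x j%:Z) => hx; last by rewrite lmul_gt ?Hser_bnd.
rewrite /lmul add0n hx big_ord_recr /= big1; last first.
  move=> i _; rewrite {1}/Hser /=.
  have -> : (x - j%:Z + i%:Z == 0) = false by apply/negbTE; have := ltn_ord i; lia.
  by rewrite mul0r.
rewrite add0r {1}/Hser /=.
have -> : (x - j%:Z + (absz (j%:Z - x))%:Z == 0) by lia.
rewrite mul1r; congr Hser; lia.
Qed.

Lemma rhs_j0 (S : comRingType) (H : nat -> nat -> S) j x : rhs j 0 H x = 0.
Proof.
rewrite rhsC /rhs add0n lmul_H0 subrr add0r [X in _ + X]big_geq // addr0.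
rewrite big1 //.
by move=> i _; rewrite coordH0l mul0r.
Qed.

Definition Vser {S : comRingType} (V : nat -> nat -> S) (k : nat) : int -> S :=
  fun m => if k == 0%N then 0 else if m == k%:Z then 0
           else if m < 0 then coordH V k (absz m) else 0.

Lemma Vser_X (S : comRingType) (H : nat -> nat -> S) j i y :
  Vser (Xfield j H) i y = rhs j i H y.
Proof.
rewrite /Vser; case: (eqVneq i 0%N) => [->|hi] /=; first by rewrite rhs_j0.
case: (eqVneq y i%:Z) => [->|hy]; first by rewrite rhs_nonneg.
case: (ltrP y 0) => hy0.
  rewrite /coordH (negbTE hi) /=.
  have -> : (absz y == 0%N) = false by apply/negbTE; lia.
  rewrite /Xfield; congr rhs; lia.
have -> : y = (absz y)%:Z by lia.
by rewrite rhs_nonneg.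
Qed.

Lemma assoc_key (S : comRingType) (H : nat -> nat -> S) n j k y :
  lmul j (n + k) (Hser H j) (lmul n k (Hser H n) (Hser H k)) y =
  lmul n (j + k) (Hser H n) (lmul j k (Hser H j) (Hser H k)) y.
Proof.
rewrite -lmulA.
rewrite (@lmul_ext _ _ _ _ (lmul n j (Hser H n) (Hser H j)) _ (Hser H k)); last 2 first.
- by move=> z; rewrite lmulC.
- by [].
by rewrite addnC lmulA.
Qed.

Lemma key (S : comRingType) (H : nat -> nat -> S) n j k m :
  (forall k' y, rhs n k' H y = 0) ->
  \sum_(t < (n + k).+1) lmul n k (Hser H n) (Hser H k) t%:Z * rhs j t H m
  + (Pp H (n + k).+1 (lmul n k (Hser H n) (rhs j k H)) m
     - lmul n k (Hser H n) (rhs j k H) m) = 0.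
Proof.
move=> hZ.
set Hs := Hser H.
set g := lmul n k (Hs n) (Hs k).
set u := lmul j k (Hs j) (Hs k).
set B := (j + n + k).+1.
set A1 := lmul j (n + k) (Hs j) g.
set A2 := lmul n (j + k) (Hs n) u.
have hg : forall z, Pp H (n + k).+1 g z = g z.
  by move=> z; apply/eqP; rewrite -subr_eq0 -(@rhs_P _ _ _ _ (n + k).+1) ?hZ.
have -> : \sum_(t < (n + k).+1) g t%:Z * rhs j t H m = Pp H B A1 m - A1 m.
  have e1 : forall t : 'I_(n + k).+1, rhs j t H m =
      Pp H B (lmul j (n + k) (Hs j) (Hs t)) m - lmul j (n + k) (Hs j) (Hs t) m.
    move=> t; have ht := ltn_ord t.
    rewrite (@rhs_P _ _ _ _ B); last by rewrite /B; lia.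
    rewrite (@lmul_bnd_r _ j t (n + k) _ _ m (@Hser_bnd _ H t)); last by lia.
    congr (_ - _); apply: Pp_ext => y.
    by rewrite (@lmul_bnd_r _ j t (n + k) _ _ y (@Hser_bnd _ H t)) //; lia.
  under eq_bigr do rewrite e1 mulrBr.
  rewrite sumrB.
  rewrite -(@Pp_sum _ H B _ (fun t => g t%:Z) (fun t => lmul j (n + k) (Hs j) (Hs t))).
  have eA : forall y, \sum_(t < (n + k).+1) g t%:Z * lmul j (n + k) (Hs j) (Hs t) y = A1 y.
    move=> y; rewrite -(@lmul_sum_r _ j (n + k) (Hs j) _ (fun t => g t%:Z) Hs).
    by apply: lmul_ext => // z; rewrite -hg.
  by rewrite eA; congr (_ - _); apply: Pp_ext.
have eW : forall y, lmul n k (Hs n) (rhs j k H) y =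
    \sum_(t < (j + k).+1) u t%:Z * lmul n t (Hs n) (Hs t) y - A2 y.
  move=> y.
  rewrite -(@lmul_bnd_r _ n k (j + k) _ _ y (@rhs_bnd _ H j k k)); last by lia.
  rewrite (@lmul_ext _ _ _ _ (Hs n) _ (fun z => Pp H (j + k).+1 u z - u z)) //; last first.
    by move=> z; rewrite (@rhs_P _ _ _ _ (j + k).+1).
  rewrite lmul_sub_r /Pp (@lmul_sum_r _ n (j + k) (Hs n) _ (fun t => u t%:Z) Hs).
  congr (_ - _); apply: eq_bigr => t _; congr (_ * _).
  by rewrite (@lmul_bnd_r _ n t (j + k) _ _ y (@Hser_bnd _ H t)) //; have := ltn_ord t; lia.
rewrite -(@Pp_widen _ H (n + k) (n + k).+1 B _ m (@lmul_bnd _ n k _ _)) //; last by rewrite /B; lia.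
rewrite (@Pp_ext _ H B _ _ _ eW) eW Pp_sub.
have h0 : Pp H B (fun y => \sum_(t < (j + k).+1) u t%:Z * lmul n t (Hs n) (Hs t) y) m
     - \sum_(t < (j + k).+1) u t%:Z * lmul n t (Hs n) (Hs t) m = 0.
  rewrite (@Pp_sum _ H B _ (fun t => u t%:Z) (fun t => lmul n t (Hs n) (Hs t))) -sumrB.
  apply: big1 => t _; rewrite -mulrBr.
  rewrite -(@rhs_P _ _ _ _ B); first by rewrite hZ mulr0.
  by have := ltn_ord t; rewrite /B; lia.
have eA : A1 =1 A2 by move=> y; exact: assoc_key.
move/eqP: h0; rewrite subr_eq0 => /eqP ->.
rewrite (@Pp_ext _ H B _ _ _ eA) eA.
ring.
Qed.

Lemma coef0M (S : comRingType) (p q : {poly S}) : (p * q)`_0 = p`_0 * q`_0.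
Proof. by rewrite coefM big_ord1. Qed.

Lemma coef1M (S : comRingType) (p q : {poly S}) : (p * q)`_1 = p`_0 * q`_1 + p`_1 * q`_0.
Proof. by rewrite coefM big_ord_recr big_ord1 /= addrC. Qed.

Lemma lmul_c0 (S : comRingType) N M (F1 F2 : int -> {poly S}) x :
  (lmul N M F1 F2 x)`_0 = lmul N M (fun y => (F1 y)`_0) (fun y => (F2 y)`_0) x.
Proof. by rewrite /lmul coef_sum; apply: eq_bigr => i _; rewrite coef0M. Qed.

Lemma lmul_c1 (S : comRingType) N M (F1 F2 : int -> {poly S}) x :
  (lmul N M F1 F2 x)`_1 = lmul N M (fun y => (F1 y)`_0) (fun y => (F2 y)`_1) x
                        + lmul N M (fun y => (F1 y)`_1) (fun y => (F2 y)`_0) x.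
Proof. by rewrite /lmul coef_sum -big_split; apply: eq_bigr => i _; rewrite coef1M. Qed.

Lemma HsG0 (S : comRingType) (H V : nat -> nat -> S) t y :
  (Hser (fun a b => (H a b)%:P + V a b *: 'X) t y)`_0 = Hser H t y.
Proof.
rewrite /Hser /coordH; case: (t == 0%N) => /=; first by case: (y == 0); rewrite ?coef1 ?coef0.
case: (y == t%:Z); first by rewrite coef1.
case: (y < 0); last by rewrite coef0.
case: (absz y == 0%N); first by rewrite coef0.
by rewrite coefD coefC coefZ coefX /= mulr0 addr0.
Qed.

Lemma HsG1 (S : comRingType) (H V : nat -> nat -> S) t y :
  (Hser (fun a b => (H a b)%:P + V a b *: 'X) t y)`_1 = Vser V t y.
Proof.
rewrite /Hser /Vser /coordH; case: (t == 0%N) => /=; first by case: (y == 0); rewrite ?coef1 ?coef0.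
case: (y == t%:Z); first by rewrite coef1.
case: (y < 0); last by rewrite coef0.
case: (absz y == 0%N); first by rewrite coef0.
by rewrite coefD coefC coefZ coefX /= mulr1 add0r.
Qed.

Lemma tangent (S : comRingType) (H : nat -> nat -> S) n j k m :
  (forall k' y, rhs n k' H y = 0) ->
  (rhs n k (fun a b => (H a b)%:P + Xfield j H a b *: 'X) m)`_1 = 0.
Proof.
move=> hZ.
set G := (fun a b => _).
rewrite (@rhs_P _ G n k (n + k).+1) // coefB /Pp coef_sum.
under eq_bigr do rewrite coef1M lmul_c0 lmul_c1 HsG1 HsG0.
rewrite lmul_c1.
have hV : forall t, (fun y => (Hser G t y)`_1) =1 rhs j t H.
  by move=> t y; rewrite HsG1 Vser_X.
have hH : forall t, (fun y => (Hser G t y)`_0) =1 Hser H t.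
  by move=> t y; rewrite HsG0.
have hVn : forall x, lmul n k (fun y => (Hser G n y)`_1) (fun y => (Hser G k y)`_0) x = 0.
  by move=> x; apply: lmul0l => y; rewrite hV rhsC hZ.
have hg : forall x, lmul n k (fun y => (Hser G n y)`_0) (fun y => (Hser G k y)`_0) x
                  = lmul n k (Hser H n) (Hser H k) x.
  by move=> x; apply: lmul_ext.
have hW : forall x, lmul n k (fun y => (Hser G n y)`_0) (fun y => (Hser G k y)`_1) x
                  = lmul n k (Hser H n) (rhs j k H) x.
  by move=> x; apply: lmul_ext.
under eq_bigr do rewrite hVn hg hW Vser_X addr0.
rewrite hVn hW addr0 big_split /= -addrA.
exact: key.
Qed.

Theorem mainTheorem5 (R : fieldType) (n : nat) (hn : (1 <= n)%N) :
  (* (i) every X_j is tangent to Z_n *)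
  (forall H : nat -> nat -> R, Zset n H ->
     forall j : nat, (1 <= j)%N ->
     forall (k : nat) (m : int), ddir (Zeq n k m) H (Xfield j H) = 0)
  /\
  (* (ii) on Z_n, dH^{(n)}/dt_j = 0 *)
  (forall H : nat -> nat -> R, Zset n H ->
     forall j : nat, (1 <= j)%N ->
     forall m : int, rhs j n H m = 0)
  /\
  (* (iii) every X_j is tangent to S_n *)
  (forall H : nat -> nat -> R, Sset n H ->
     forall j : nat, (1 <= j)%N ->
     (forall (k : nat) (m : int), ddir (Zeq n k m) H (Xfield j H) = 0)
     /\ (forall m : int, ddir (Heq n m) H (Xfield j H) = 0)).
Proof.
have hi : forall H : nat -> nat -> R, Zset n H ->
     forall j : nat, (1 <= j)%N ->
     forall (k : nat) (m : int), ddir (Zeq n k m) H (Xfield j H) = 0.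
  move=> H hZ j hj k m; rewrite /ddir /Zeq; exact: tangent.
have hii : forall H : nat -> nat -> R, Zset n H ->
     forall j : nat, (1 <= j)%N -> forall m : int, rhs j n H m = 0.
  by move=> H hZ j hj m; rewrite rhsC hZ.
split; first exact: hi.
split; first exact: hii.
move=> H [hZ hS] j hj; split; first exact: hi.
move=> m; rewrite /ddir /Heq HsG1 Vser_X; exact: hii.
Qed.
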